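(* Let $V=\mathbb{C}x+\mathbb{C}y+\mathbb{C}z$ with the action of the Heisenberg group $H_3$ given by $e_1\cdot x=z,\ e_1\cdot y=x,\ e_1\cdot z=y$, $e_2\cdot x=x,\ e_2\cdot y=\omega y,\ e_2\cdot z=\omega^2 z$ ($\omega$ a primitive third root of unity), extended diagonally to tensor powers. For $p=[a:b:c]\in\mathbb{P}^2$ let $W_p\subset V\otimes V$ be the span of $ayz+bzy+cx^2,\ azx+bxz+cy^2,\ axy+byx+cz^2$. Then for every $p\in\mathbb{P}^2$, the space of $H_3$-invariants $(W_p\otimes V\cap V\otimes W_p)^{H_3}$ is 1-dimensional.
   Context: $H_3=\langle e_1,e_2\mid [e_1,e_2]\text{ central},\ e_1^3=e_2^3=1\rangle$ is the Heisenberg group of order 27. The intersection is taken inside $V\otimes V\otimes V$. *)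

(* Defs.v *)
From mathcomp Require Import all_boot all_order all_algebra all_field.
From mathcomp.real_closed Require Export mxtens.
Set Implicit Arguments. Unset Strict Implicit. Unset Printing Implicit Defensive.
Import GRing.Theory Num.Theory.
Local Open Scope ring_scope.

(* V = C x + C y + C z, vectors are row vectors 'rV[algC]_3 with coordinates
   (x, y, z) at indices 0, 1, 2.  A linear map g is the matrix whose i-th row
   is g(e_i), acting by v |-> v *m g. *)

Definition rho_e1 : 'M[algC]_3 :=
  \matrix_(i < 3, j < 3)
    (if ((i == 0%N :> nat) && (j == 2%N :> nat))
        || ((i == 1%N :> nat) && (j == 0%N :> nat))
        || ((i == 2%N :> nat) && (j == 1%N :> nat)) then 1 else 0).

Definition rho_e2 (w : algC) : 'M[algC]_3 :=
  \matrix_(i < 3, j < 3) (if i == j then w ^+ i else 0).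

Definition act3 (g : 'M[algC]_3) : 'M[algC]_(3 * 3 * 3) := (g *t g) *t g.

Definition ex : 'rV[algC]_3 := delta_mx 0 0.
Definition ey : 'rV[algC]_3 := delta_mx 0 1.
Definition ez : 'rV[algC]_3 := delta_mx 0 2.

Definition Wp (a b c : algC) : 'M[algC]_(3, 3 * 3) :=
  col_mx (a *: (ey *t ez) + b *: (ez *t ey) + c *: (ex *t ex))
   (col_mx (a *: (ez *t ex) + b *: (ex *t ez) + c *: (ey *t ey))
           (a *: (ex *t ey) + b *: (ey *t ex) + c *: (ez *t ez))).

Definition WpV (a b c : algC) : 'M[algC]_(3 * 3, 3 * 3 * 3) :=
  Wp a b c *t (1%:M : 'M_3).
Definition VWp (a b c : algC) : 'M[algC]_(3 * 3, 3 * 3 * 3) :=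
  (1%:M : 'M_3) *t Wp a b c.

(* H_3-invariant vectors of V (x) V (x) V: the fixed space of the
   (generators e1, e2 of the) group H_3. *)
Definition invariants3 (w : algC) : 'M[algC]_(3 * 3 * 3) :=
  (kermx (act3 rho_e1 - 1%:M) :&: kermx (act3 (rho_e2 w) - 1%:M))%MS.

(* Main.v *)
Require Import Defs.
From mathcomp Require Import all_boot all_order all_algebra all_field.
From mathcomp.real_closed Require Import mxtens.
Set Implicit Arguments. Unset Strict Implicit. Unset Printing Implicit Defensive.
Local Open Scope ring_scope.
Import GRing.Theory.

Definition o0 : 'I_3 := @Ordinal 3 0 isT.
Definition o1 : 'I_3 := @Ordinal 3 1 isT.
Definition o2 : 'I_3 := @Ordinal 3 2 isT.

Lemma ord3P (i : 'I_3) : i = o0 \/ i = o1 \/ i = o2.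
Proof.
case: i => [[|[|[|//]]] Hi]; [left|right;left|right;right]; exact: val_inj.
Qed.

Definition tau (i : 'I_3) : 'I_3 := if i == o0 then o1 else if i == o1 then o2 else o0.

Lemma t0 : tau o0 = o1. Proof. by []. Qed.
Lemma t1 : tau o1 = o2. Proof. by []. Qed.
Lemma t2 : tau o2 = o0. Proof. by []. Qed.
Lemma e01 : (o0 == o1) = false. Proof. by []. Qed.
Lemma e02 : (o0 == o2) = false. Proof. by []. Qed.
Lemma e10 : (o1 == o0) = false. Proof. by []. Qed.
Lemma e12 : (o1 == o2) = false. Proof. by []. Qed.
Lemma e20 : (o2 == o0) = false. Proof. by []. Qed.
Lemma e21 : (o2 == o1) = false. Proof. by []. Qed.
Definition osimp := (t0, t1, t2, e01, e02, e10, e12, e20, e21, eqxx).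

Lemma sum3 (F : 'I_3 -> algC) : \sum_(l < 3) F l = F o0 + F o1 + F o2.
Proof.
rewrite !big_ord_recl big_ord0 addr0 addrA.
by congr (F _ + F _ + F _); apply: val_inj.
Qed.

Definition idx3 (i j k : 'I_3) : 'I_(3*3*3) := mxtens_index (mxtens_index (i,j), k).
Definition crd (v : 'rV[algC]_(3*3*3)) i j k := v 0 (idx3 i j k).

Lemma crd_inj u v : (forall i j k, crd u i j k = crd v i j k) -> u = v.
Proof.
move=> H; apply/rowP => l; case: (mxtens_indexP l) => ij k.
case: (mxtens_indexP ij) => i j; exact: H.
Qed.

Lemma sum_tens m n (F : 'I_(m*n) -> algC) :
  \sum_l F l = \sum_i \sum_j F (mxtens_index (i,j)).
Proof.
rewrite (reindex (@mxtens_index m n)) /=; last first.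
  by exists (@mxtens_unindex m n) => x _; [apply: mxtens_indexK|apply: mxtens_unindexK].
by rewrite pair_big; apply: eq_bigr => [[i j]].
Qed.

Lemma mul_tens m n p q (v : 'rV[algC]_(m*n)) (A : 'M_(m,p)) (B : 'M_(n,q)) i j :
  (v *m (A *t B)) 0 (mxtens_index (i,j)) =
  \sum_k \sum_l v 0 (mxtens_index (k,l)) * (A k i * B l j).
Proof.
rewrite mxE sum_tens; apply: eq_bigr => k _; apply: eq_bigr => l _.
by rewrite tensmxE.
Qed.

Lemma sum_delta (F : 'I_3 -> algC) x :
  (forall i', i' != x -> F i' = 0) -> \sum_i' F i' = F x.
Proof.
by move=> H; rewrite (bigD1 x) //= big1 ?addr0 // => i' /H.
Qed.

Lemma crd_act (g : 'M[algC]_3) f d v i j k :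
  (forall i' i, g i' i = (i' == f i)%:R * d i) ->
  crd (v *m act3 g) i j k = crd v (f i) (f j) (f k) * (d i * d j * d k).
Proof.
move=> Hg; rewrite /crd /act3 /idx3 mul_tens sum_tens.
under eq_bigr do under eq_bigr do under eq_bigr do rewrite tensmxE !Hg.
rewrite (@sum_delta _ (f i)); last first.
  move=> i' /negPf ne; apply: big1 => j' _; apply: big1 => k' _.
  by rewrite ne !mul0r mulr0.
rewrite (@sum_delta _ (f j)); last first.
  move=> j' /negPf ne; apply: big1 => k' _.
  by rewrite ne !(mul0r, mulr0).
rewrite (@sum_delta _ (f k)); last first.
  by move=> k' /negPf ne; rewrite ne !(mul0r, mulr0).
by rewrite !eqxx !mul1r.
Qed.

Lemma rho_e2E w i' i : rho_e2 w i' i = (i' == i)%:R * w ^+ i.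
Proof. by rewrite mxE; case: eqP => [->|]; rewrite ?mul1r ?mul0r. Qed.

Lemma rho_e1E i' i : rho_e1 i' i = (i' == tau i)%:R * 1.
Proof.
rewrite mulr1 mxE.
by case: (ord3P i') => [->|[->|->]]; case: (ord3P i) => [->|[->|->]].
Qed.

Lemma tens_deltaE (x : 'I_(1*1)) p q i j :
  ((delta_mx 0 p : 'rV[algC]_3) *t (delta_mx 0 q : 'rV[algC]_3)) x (mxtens_index (i,j))
  = ((i == p) && (j == q))%:R.
Proof.
rewrite mxE mxtens_indexK /= !mxE.
rewrite !(ord1 (mxtens_unindex x).1) !(ord1 (mxtens_unindex x).2) eqxx /=.
by rewrite -natrM mulnb.
Qed.

Definition wc (a b c : algC) (l i j : 'I_3) : algC :=
  a * ((i == tau l) && (j == tau (tau l)))%:R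
  + b * ((i == tau (tau l)) && (j == tau l))%:R
  + c * ((i == l) && (j == l))%:R.

Lemma col_mx3E n (r1 r2 r3 : 'rV[algC]_n) (l : 'I_3) x :
  (col_mx r1 (col_mx r2 r3) : 'M_(1 + (1 + 1), n)) l x =
  if l == o0 then r1 0 x else if l == o1 then r2 0 x else r3 0 x.
Proof.
rewrite mxE; case: splitP => [l' Hl | l' Hl].
  have -> : l == o0 by apply/eqP/val_inj; rewrite /= Hl [l']ord1.
  by rewrite [l']ord1.
have -> : (l == o0) = false by apply/negbTE; apply/eqP => /(congr1 val); rewrite /= Hl.
rewrite mxE; case: splitP => [l'' Hl' | l'' Hl'].
  have -> : l == o1 by apply/eqP/val_inj; rewrite /= Hl Hl' [l'']ord1.
  by rewrite [l'']ord1.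
have -> : (l == o1) = false by apply/negbTE; apply/eqP => /(congr1 val); rewrite /= Hl Hl'.
by rewrite [l'']ord1.
Qed.

Lemma lin3E n (a b c : algC) (X Y Z : 'rV[algC]_n) x :
  (a *: X + b *: Y + c *: Z) 0 x = a * X 0 x + b * Y 0 x + c * Z 0 x.
Proof. by rewrite !mxE. Qed.

Lemma WpE a b c l i j : Wp a b c l (mxtens_index (i,j)) = wc a b c l i j.
Proof.
rewrite /Wp col_mx3E /wc /ex /ey /ez.
case: (ord3P l) => [->|[->|->]]; rewrite !osimp lin3E !tens_deltaE; reflexivity.
Qed.

Ltac wsimp := rewrite /wc ?osimp /= ?(mulr0n, mulr1n, mulr0, mulr1, addr0, add0r).
Ltac c27 i j k := case: (ord3P i) => [->|[->|->]]; case: (ord3P j) => [->|[->|->]];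
  case: (ord3P k) => [->|[->|->]].

Lemma wc_rot a b c i j k : wc a b c i j k = wc a b c k i j.
Proof. by c27 i j k; wsimp. Qed.

Lemma wc_tau a b c i j k : wc a b c (tau k) (tau i) (tau j) = wc a b c k i j.
Proof. by c27 i j k; wsimp. Qed.

Lemma wmod (w : algC) m : w ^+ 3 = 1 -> w ^+ m = w ^+ (m %% 3).
Proof. by move=> h; rewrite {1}(divn_eq m 3) exprD mulnC exprM h expr1n mul1r. Qed.

Lemma wc_w a b c w i j k : w ^+ 3 = 1 ->
  wc a b c k i j * (w ^+ i * w ^+ j * w ^+ k) = wc a b c k i j.
Proof.
move=> h; rewrite -!exprD (wmod _ h).
by c27 i j k; wsimp; rewrite ?mul0r ?expr0 ?mulr1.
Qed.

Definition Phi a b c : 'rV[algC]_(3*3*3) :=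
  \row_l wc a b c (@mxtens_unindex (3*3) 3 l).2
     (@mxtens_unindex 3 3 (@mxtens_unindex (3*3) 3 l).1).1
     (@mxtens_unindex 3 3 (@mxtens_unindex (3*3) 3 l).1).2.

Lemma crd_Phi a b c i j k : crd (Phi a b c) i j k = wc a b c k i j.
Proof. by rewrite /crd /idx3 mxE !mxtens_indexK. Qed.

Lemma crd_WpV a b c (r : 'rV[algC]_(3*3)) i j k :
  crd (r *m WpV a b c) i j k =
  \sum_l r 0 (mxtens_index (l,k)) * wc a b c l i j.
Proof.
rewrite /crd /idx3 /WpV mul_tens; apply: eq_bigr => l _.
rewrite (@sum_delta _ k); last first.
  by move=> m /negPf ne; rewrite [1%:M _ _]mxE ne mulr0n !mulr0.
by rewrite [1%:M _ _]mxE eqxx mulr1n mulr1 WpE.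
Qed.

Lemma idx3E i j k :
  idx3 i j k = (mxtens_index (i, mxtens_index (j,k)) : 'I_(3*(3*3))).
Proof. by apply: val_inj => /=; rewrite mulnDl -mulnA addnA. Qed.

Lemma crd_VWp a b c (r : 'rV[algC]_(3*3)) i j k :
  crd (r *m VWp a b c) i j k =
  \sum_l r 0 (mxtens_index (i,l)) * wc a b c l j k.
Proof.
have E := mul_tens r (1%:M : 'M_3) (Wp a b c) i (mxtens_index (j,k)).
rewrite /crd idx3E /VWp; etransitivity; first exact: E.
rewrite (@sum_delta _ i); last first.
  by move=> m /negPf ne; apply: big1 => l _; rewrite [1%:M _ _]mxE ne mulr0n !mul0r mulr0.
by apply: eq_bigr => l _; rewrite [1%:M _ _]mxE eqxx mulr1n mul1r WpE.
Qed.

Lemma crd_scale x v i j k : crd (x *: v) i j k = x * crd v i j k.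
Proof. by rewrite /crd mxE. Qed.

Lemma zero_of (x y : algC) : x * y = x -> y != 1 -> x = 0.
Proof.
move=> h ny; apply/eqP; rewrite -[x == 0]orbF -(negbTE ny).
have : x * (y - 1) == 0 by rewrite mulrBr mulr1 h subrr.
by rewrite mulf_eq0 subr_eq0.
Qed.

Lemma fix_act (v : 'rV[algC]_(3*3*3)) g :
  (v <= kermx (act3 g - 1%:M))%MS -> v *m act3 g = v.
Proof. by rewrite sub_kermx mulmxBr mulmx1 subr_eq0 => /eqP. Qed.

Theorem mainTheorem7 (w : algC) (a b c : algC) :
  3.-primitive_root w ->
  [|| a != 0, b != 0 | c != 0] ->
  \rank ((WpV a b c :&: VWp a b c) :&: invariants3 w)%MS = 1%N.
Proof.
move=> pw hp.
have w3 : w ^+ 3 = 1 := prim_expr_order pw.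
have wne m : (m %% 3 != 0)%N -> w ^+ m != 1.
  by move=> hm; rewrite -(prim_order_dvd pw) /dvdn.
have H1 : (Phi a b c <= (WpV a b c :&: VWp a b c) :&: invariants3 w)%MS.
  rewrite /invariants3 !sub_capmx; apply/andP; split; apply/andP; split.
  - apply/submxP; exists (\row_l ((@mxtens_unindex 3 3 l).1 == (@mxtens_unindex 3 3 l).2)%:R).
    apply: crd_inj => i j k; rewrite crd_Phi crd_WpV (@sum_delta _ k).
      by rewrite mxE mxtens_indexK eqxx mul1r.
    by move=> l /negPf ne; rewrite mxE mxtens_indexK /= ne mul0r.
  - apply/submxP; exists (\row_l ((@mxtens_unindex 3 3 l).1 == (@mxtens_unindex 3 3 l).2)%:R).
    apply: crd_inj => i j k; rewrite crd_Phi crd_VWp (@sum_delta _ i).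
      by rewrite mxE mxtens_indexK /= eqxx mul1r (wc_rot _ _ _ i j k).
    by move=> l; rewrite eq_sym => /negPf ne; rewrite mxE mxtens_indexK /= ne mul0r.
  - rewrite sub_kermx mulmxBr mulmx1 subr_eq0; apply/eqP; apply: crd_inj => i j k.
    by rewrite (crd_act _ _ _ _ rho_e1E) !crd_Phi wc_tau !mulr1.
  - rewrite sub_kermx mulmxBr mulmx1 subr_eq0; apply/eqP; apply: crd_inj => i j k.
    by rewrite (crd_act _ _ _ _ (rho_e2E w)) !crd_Phi wc_w.
have H2 : ((WpV a b c :&: VWp a b c) :&: invariants3 w <= Phi a b c)%MS.
  apply/row_subP => l.
  move: (row_sub l ((WpV a b c :&: VWp a b c) :&: invariants3 w)%MS).
  set v := row l _.
  rewrite /invariants3 !sub_capmx => /andP[/andP[vW _] /andP[k1 k2]].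
  have F1 i j k : crd v i j k * (w ^+ i * w ^+ j * w ^+ k) = crd v i j k.
    by rewrite -(crd_act _ _ _ _ (rho_e2E w)) fix_act.
  have F2 i j k : crd v (tau i) (tau j) (tau k) = crd v i j k.
    by rewrite -{2}(fix_act k1) (crd_act _ _ _ _ rho_e1E) !mulr1.
  case/submxP: vW => r Hr.
  set lam := r 0 (mxtens_index (o0, o0)).
  have F3 i j k : crd v i j k = \sum_l r 0 (mxtens_index (l,k)) * wc a b c l i j.
    by rewrite Hr crd_WpV.
  have v000 : crd v o0 o0 o0 = lam * c.
    by rewrite F3 sum3; wsimp.
  have v120 : crd v o1 o2 o0 = lam * a.
    by rewrite F3 sum3; wsimp.
  have v210 : crd v o2 o1 o0 = lam * b.
    by rewrite F3 sum3; wsimp.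
  have v111 : crd v o1 o1 o1 = lam * c by rewrite -v000 -(F2 o0 o0 o0) !osimp.
  have v222 : crd v o2 o2 o2 = lam * c by rewrite -v111 -(F2 o1 o1 o1) !osimp.
  have v201 : crd v o2 o0 o1 = lam * a by rewrite -v120 -(F2 o1 o2 o0) !osimp.
  have v012 : crd v o0 o1 o2 = lam * a by rewrite -v201 -(F2 o2 o0 o1) !osimp.
  have v021 : crd v o0 o2 o1 = lam * b by rewrite -v210 -(F2 o2 o1 o0) !osimp.
  have v102 : crd v o1 o0 o2 = lam * b by rewrite -v021 -(F2 o0 o2 o1) !osimp.
  have -> : v = lam *: Phi a b c.
    apply: crd_inj => i j k; rewrite crd_scale crd_Phi.
    c27 i j k; wsimp; rewrite ?mulr0; try done;
      apply: (zero_of (F1 _ _ _)); rewrite -!exprD; apply: wne; done.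
  by apply: scalemx_sub; apply: submx_refl.
have Hn : Phi a b c != 0.
  apply: contraTneq hp => h0.
  have := crd_Phi a b c o1 o2 o0; have := crd_Phi a b c o2 o1 o0;
  have := crd_Phi a b c o0 o0 o0; rewrite h0 /crd !mxE; wsimp.
  by move=> <- <- <-; rewrite eqxx.
transitivity (\rank (Phi a b c)); first by apply: eqmx_rank; rewrite H1 H2.
by rewrite rank_rV Hn.
Qed.
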